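(* Let $\rho,\lambda,\mu$ be partitions of $n$, write $|\rho|$ for the number of parts of $\rho$, and let $|\lambda|=I$, $|\mu|=J$. Let $m_\rho=m_\rho^\lambda m_\rho^\mu$. Then: (a) $m_{(n-1,1)}=(I-1)(J-1)$; this is the multiplicity attached to $\beta_{(n-1,1)}=1-2/n$. (b) If $m_\rho>0$, then $|\rho|\le\min(I,J)$ and $\rho_1\ge\max(\lambda_1,\mu_1)$. (c) If $\rho=(n-k,k)$ with $1\le k\le\lfloor n/2\rfloor$ and $\lambda=(n-j,j)$, then $m_\rho^\lambda=0$ if $k>j$ and $m_\rho^\lambda=1$ otherwise. (d) If $\rho=(n-k,k)$, $\mu=(\mu_1,\dots,\mu_J)$ and $\mu_1\ge k$, then \[ m_\rho^\mu=\#\Big\{(x_1,\dots,x_{J-1})\in\mathbb{N}^{J-1}:\ \sum_{j=1}^{J-1}x_j=k,\ x_j\le\mu_{j+1}\Big\}=\big|\mathcal{T}_{(k,\,n-\mu_1-k),(\mu_2,\mu_3,\dots,\mu_J)}\big|. \]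
   Context: For partitions $\rho,\lambda$ of $n$, the Kostka number $m_\rho^\lambda$ is the number of semistandard Young tableaux of shape $\rho$ and content $\lambda$: fillings of the Young diagram of $\rho$ with $\lambda_1$ symbols $1$, $\lambda_2$ symbols $2$, etc., with rows weakly increasing and columns strictly increasing. $\beta_\rho=\frac1n+\frac1{n^2}\sum_{j}\left[\rho_j^2-(2j-1)\rho_j\right]$. For sequences $a=(a_1,\dots,a_p)$, $b=(b_1,\dots,b_q)$ of nonnegative integers with equal sums, $\mathcal{T}_{a,b}$ denotes the set of $p\times q$ nonnegative integer tables with row sums $a$ and column sums $b$. Here $\mathbb{N}=\{0,1,2,\dots\}$. *)

(* Defs.v *)
From mathcomp Require Import all_boot all_order all_algebra.
Set Implicit Arguments. Unset Strict Implicit. Unset Printing Implicit Defensive.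
Import GRing.Theory Num.Theory.

(* A partition of n: a weakly decreasing sequence of positive integers
   summing to n.  Parts are rho_1 = nth 0 rho 0, rho_2 = nth 0 rho 1, ... *)
Definition is_partition (n : nat) (rho : seq nat) : bool :=
  [&& sorted geq rho, all (fun x => 0 < x) rho & sumn rho == n].

(* The cells (i,j) of the Young diagram of rho (0-indexed row i, column j). *)
Definition cell (rho : seq nat) :=
  {c : 'I_(size rho) * 'I_(head 0 rho) | c.2 < nth 0 rho c.1}.

(* A semistandard filling of shape rho and content lam: the symbols are
   'I_(size lam) (symbol a stands for a+1); rows weakly increase, columns
   strictly increase, and symbol a occurs exactly lam_(a+1) times. *)
Definition is_ssyt (rho lam : seq nat) (f : {ffun cell rho -> 'I_(size lam)}) : bool :=
  [&& [forall c : cell rho, forall c' : cell rho,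
        ((val c).1 == (val c').1) && ((val c).2 <= (val c').2) ==> (f c <= f c')],
      [forall c : cell rho, forall c' : cell rho,
        ((val c).2 == (val c').2) && ((val c).1 < (val c').1) ==> (f c < f c')]
    & [forall a : 'I_(size lam), #|[set c | f c == a]| == nth 0 lam a]].

Definition kostka (rho lam : seq nat) : nat :=
  #|[set f : {ffun cell rho -> 'I_(size lam)} | is_ssyt f]|.

Definition beta (n : nat) (rho : seq nat) : rat :=
  ((n%:R)^-1 + (n%:R ^+ 2)^-1 *
    \sum_(j < size rho) ((nth 0 rho j)%:R ^+ 2 - (2 * j.+1 - 1)%:R * (nth 0 rho j)%:R))%R.

(* |T_{a,b}| : number of (size a) x (size b) tables of naturals with row sums a
   and column sums b.  Entries are necessarily <= sumn a, so they are taken in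
   'I_(sumn a).+1 without loss. *)
Definition num_tables (a b : seq nat) : nat :=
  #|[set M : {ffun 'I_(size a) * 'I_(size b) -> 'I_(sumn a).+1} |
     [forall i : 'I_(size a), \sum_(j < size b) (M (i, j) : nat) == nth 0 a i]
     && [forall j : 'I_(size b), \sum_(i < size a) (M (i, j) : nat) == nth 0 b j]]|.

(* #{x in N^p : sum x = k, x_j <= bound_j}; entries necessarily <= k. *)
Definition num_bounded_comps (p k : nat) (bound : nat -> nat) : nat :=
  #|[set x : {ffun 'I_p -> 'I_k.+1} |
     (\sum_(j < p) (x j : nat) == k) && [forall j : 'I_p, (x j : nat) <= bound j]]|.

(* Main.v *)
Require Import Defs.
From mathcomp Require Import all_boot all_order all_algebra.
From mathcomp Require Import zify ring lra.
Import GRing.Theory Num.Theory.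
Set Implicit Arguments. Unset Strict Implicit. Unset Printing Implicit Defensive.

Lemma card_split (T : finType) (P Q : pred T) :
  #|[set x | P x]| = #|[set x | P x && Q x]| + #|[set x | P x && ~~ Q x]|.
Proof.
rewrite -(cardsID [set x | Q x] [set x | P x]); congr (_ + _);
  apply: eq_card => x; by rewrite !inE // andbC.
Qed.

Definition crow (rho : seq nat) (c : cell rho) : nat := (val c).1.
Definition ccol (rho : seq nat) (c : cell rho) : nat := (val c).2.

Lemma ccol_lt (rho : seq nat) (c : cell rho) : ccol c < nth 0 rho (crow c).
Proof. exact: (valP c). Qed.

Lemma crow_lt (rho : seq nat) (c : cell rho) : crow c < size rho.
Proof. exact: ltn_ord. Qed.

Lemma ccol_lth (rho : seq nat) (c : cell rho) : ccol c < head 0 rho.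
Proof. exact: ltn_ord. Qed.

Lemma cell_eq (rho : seq nat) (c c' : cell rho) :
  crow c = crow c' -> ccol c = ccol c' -> c = c'.
Proof.
move: c c' => [[r s] h] [[r' s'] h'] /= e1 e2; apply: val_inj => /=.
rewrite /crow /ccol /= in e1 e2.
by congr pair; apply: val_inj.
Qed.

Lemma card_row_lt (rho : seq nat) (i : 'I_(size rho)) (q : nat) :
  q <= nth 0 rho i -> q <= head 0 rho ->
  #|[set c : cell rho | (crow c == i) && (ccol c < q)]| = q.
Proof.
move=> hqi hqh.
pose g (j : 'I_q) : cell rho := exist _ (i, widen_ord hqh j) (leq_trans (ltn_ord j) hqi).
have inj_g : injective g.
  move=> j1 j2 /(congr1 (fun c => ccol c)) /= h; exact: val_inj.
transitivity #|g @: [set: 'I_q]|; last by rewrite card_imset // cardsT card_ord.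
apply: eq_card => c; rewrite !inE; apply/andP/imsetP.
  move=> [/eqP hr hc]; exists (Ordinal hc) => //.
  by apply: cell_eq.
move=> [j _ ->]; split => //=; exact: ltn_ord j.
Qed.

Lemma ssyt_row (rho lam : seq nat) (f : {ffun cell rho -> 'I_(size lam)}) :
  is_ssyt f -> forall c c', crow c = crow c' -> ccol c <= ccol c' -> f c <= f c'.
Proof.
case/and3P => /forallP H _ _ c c' e1 e2.
move/forallP: (H c) => /(_ c') /implyP; apply; apply/andP; split => //.
by apply/eqP/val_inj.
Qed.

Lemma ssyt_col (rho lam : seq nat) (f : {ffun cell rho -> 'I_(size lam)}) :
  is_ssyt f -> forall c c', ccol c = ccol c' -> crow c < crow c' -> f c < f c'.
Proof.
case/and3P => _ /forallP H _ c c' e1 e2.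
move/forallP: (H c) => /(_ c') /implyP; apply; apply/andP; split => //.
by apply/eqP/val_inj.
Qed.

Lemma ssyt_cont (rho lam : seq nat) (f : {ffun cell rho -> 'I_(size lam)}) :
  is_ssyt f -> forall a : 'I_(size lam), #|[set c | f c == a]| = nth 0 lam a.
Proof. by case/and3P => _ _ /forallP H a; apply/eqP. Qed.

Lemma ssytP (rho lam : seq nat) (f : {ffun cell rho -> 'I_(size lam)}) :
  (forall c c', crow c = crow c' -> ccol c <= ccol c' -> f c <= f c') ->
  (forall c c', ccol c = ccol c' -> crow c < crow c' -> f c < f c') ->
  (forall a : 'I_(size lam), #|[set c | f c == a]| = nth 0 lam a) ->
  is_ssyt f.
Proof.
move=> H1 H2 H3; apply/and3P; split.
- apply/forallP => c; apply/forallP => c'; apply/implyP => /andP[/eqP e1 e2].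
  by apply: H1 => //; rewrite /crow e1.
- apply/forallP => c; apply/forallP => c'; apply/implyP => /andP[/eqP e1 e2].
  by apply: H2 => //; rewrite /ccol e1.
- by apply/forallP => a; apply/eqP.
Qed.

Definition Nle (rho lam : seq nat) (f : {ffun cell rho -> 'I_(size lam)}) (i a : nat) :=
  #|[set c | (crow c == i) && (f c <= a)]|.
Definition cnt (rho lam : seq nat) (f : {ffun cell rho -> 'I_(size lam)}) (i b : nat) :=
  #|[set c | (crow c == i) && (f c == b :> nat)]|.

Lemma ssyt_le (rho lam : seq nat) (f : {ffun cell rho -> 'I_(size lam)}) :
  is_ssyt f -> forall c a, (f c <= a) = (ccol c < Nle f (crow c) a).
Proof.
move=> Hf c a; apply/idP/idP => h.
- have h1 : ccol c < nth 0 rho (crow c) := ccol_lt c.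
  have h2 : ccol c < head 0 rho := ccol_lth c.
  have := @card_row_lt rho (Ordinal (crow_lt c)) _ h1 h2; rewrite /= => <-.
  apply: subset_leq_card; apply/subsetP => c'; rewrite !inE => /andP[/eqP e1 e2].
  rewrite e1 eqxx /=; apply: leq_trans h; apply: (ssyt_row Hf) => //.
- apply: contraLR h; rewrite -!ltnNge => h.
  have h1 : ccol c <= nth 0 rho (crow c) := ltnW (ccol_lt c).
  have h2 : ccol c <= head 0 rho := ltnW (ccol_lth c).
  have := @card_row_lt rho (Ordinal (crow_lt c)) _ h1 h2; rewrite /= => e.
  rewrite ltnS -{1}e; apply: subset_leq_card; apply/subsetP => c'.
  rewrite !inE => /andP[/eqP e1 e2]; rewrite e1 eqxx /=.
  rewrite ltnNge; apply/negP => h3.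
  have := ssyt_row Hf (esym e1) h3; rewrite leqNgt => /negP; apply.
  exact: leq_ltn_trans e2 h.
Qed.

Lemma ssyt_det (rho lam : seq nat) (f g : {ffun cell rho -> 'I_(size lam)}) :
  is_ssyt f -> is_ssyt g -> (forall i a, Nle f i a = Nle g i a) -> f = g.
Proof.
move=> Hf Hg H; apply/ffunP => c; apply/val_inj/eqP; rewrite eqn_leq; apply/andP; split.
- by rewrite (ssyt_le Hf) H -(ssyt_le Hg).
- by rewrite (ssyt_le Hg) -H -(ssyt_le Hf).
Qed.

Lemma Nle_sum (rho lam : seq nat) (f : {ffun cell rho -> 'I_(size lam)}) i a :
  Nle f i a = \sum_(0 <= b < a.+1) cnt f i b.
Proof.
elim: a => [|a IH].
  rewrite big_nat1 /Nle /cnt; apply: eq_card => c; by rewrite !inE leqn0.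
rewrite big_nat_recr //= -IH /Nle /cnt (card_split _ (fun c => f c <= a)).
congr (_ + _); apply: eq_card => c; rewrite !inE.
  by case: (crow c == i) => //=; apply/idP/idP => [/andP[]//|h]; rewrite h (leq_trans h).
case: (crow c == i) => //=; rewrite -ltnNge.
by rewrite eq_sym eqn_leq andbC.
Qed.


Lemma part_nth_le n (rho : seq nat) i :
  is_partition n rho -> nth 0 rho i <= head 0 rho.
Proof.
case/and3P => hs _ _; case: rho hs => [|r0 rho] hs //=; first by rewrite nth_nil.
case: (ltnP i (size rho).+1) => hi.
  have := @sorted_leq_nth _ geq (fun a b c h1 h2 => leq_trans h2 h1) leqnn 0 _ hs 0 i.
  by apply.
by rewrite nth_default.
Qed.

Lemma part_nth_pos n (rho : seq nat) i :
  is_partition n rho -> i < size rho -> 0 < nth 0 rho i.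
Proof. by case/and3P => _ /(all_nthP 0) h _; apply: h. Qed.

Lemma kostka_pos n (rho lam : seq nat) :
  is_partition n rho -> 0 < kostka rho lam ->
  size rho <= size lam /\ head 0 lam <= head 0 rho.
Proof.
move=> hp /card_gt0P [f]; rewrite inE => Hf; split.
  case Es: (size rho) => [|s] //.
  have h0 : 0 < head 0 rho.
    have := @part_nth_pos n rho 0 hp; rewrite Es => /(_ isT); by case: (rho).
  pose g (i : 'I_(size rho)) : 'I_(size lam) :=
    f (exist (fun c : 'I_(size rho) * 'I_(head 0 rho) => c.2 < nth 0 rho c.1)
             (i, Ordinal h0) (part_nth_pos hp (ltn_ord i))).
  have inj_g : injective g.
    move=> i j e; apply/val_inj/eqP; case: ltngtP => // h.
      have := ssyt_col Hf (c := exist _ (i, Ordinal h0) (part_nth_pos hp (ltn_ord i)))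
           (c' := exist _ (j, Ordinal h0) (part_nth_pos hp (ltn_ord j))) erefl h.
      by rewrite -/(g i) -/(g j) e ltnn.
    have := ssyt_col Hf (c := exist _ (j, Ordinal h0) (part_nth_pos hp (ltn_ord j)))
           (c' := exist _ (i, Ordinal h0) (part_nth_pos hp (ltn_ord i))) erefl h.
    by rewrite -/(g i) -/(g j) e ltnn.
  by have := leq_card g inj_g; rewrite !card_ord -Es.
case: lam f Hf => [|l0 lam] f Hf //=.
have := ssyt_cont Hf ord0; rewrite /= => <-.
have row0 : forall c, f c == ord0 -> crow c = 0.
  move=> c /eqP hc; case E: (crow c) => [|r] //.
  have hs : 0 < size rho by have := crow_lt c; lia.
  have hcol : ccol c < nth 0 rho 0.
    apply: (leq_trans (ccol_lt c)); rewrite nth0; exact: part_nth_le hp.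
  have := ssyt_col Hf (c := exist (fun c : 'I_(size rho) * 'I_(head 0 rho) => c.2 < nth 0 rho c.1)
               (Ordinal hs, (val c).2) hcol) (c' := c) erefl.
  by rewrite hc E /= => /(_ isT).
pose col' (c : cell rho) : 'I_(head 0 rho) := (val c).2.
rewrite -(card_in_imset (f := col')); last first.
  move=> c c'; rewrite !inE => h1 h2 e; apply: cell_eq.
    by rewrite (row0 _ h1) (row0 _ h2).
  by rewrite /ccol -/(col' c) e.
by rewrite -[X in _ <= X]card_ord max_card.
Qed.


Lemma sum_eq_pointwise (F G : nat -> nat) m :
  (forall a, a < m -> \sum_(0 <= b < a.+1) F b = \sum_(0 <= b < a.+1) G b) ->
  forall b, b < m -> F b = G b.
Proof.
move=> H [|b] hb; first by have := H 0 hb; rewrite !big_nat1.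
have := H b.+1 hb; rewrite !(big_nat_recr b.+1) //= (H b (ltnW hb)).
by move/addnI.
Qed.

Lemma crow2 n k (c : cell [:: n - k; k]) : crow c < 2.
Proof. exact: crow_lt c. Qed.

Lemma cnt_split n k lam (f : {ffun cell [:: n - k; k] -> 'I_(size lam)}) (b : 'I_(size lam)) :
  #|[set c | f c == b]| = cnt f 0 b + cnt f 1 b.
Proof.
rewrite (card_split _ (fun c => crow c == 0)) /cnt; congr (_ + _); apply: eq_card => c;
  rewrite !inE andbC //.
by have := crow2 c; case: (crow c) => [|[|]].
Qed.

Lemma card_row2 n k i (P : pred (cell [:: n - k; k])) :
  k <= n - k -> i < 2 -> (forall c, crow c = i -> P c = (ccol c < nth 0 [:: n - k; k] i)) ->
  #|[set c | (crow c == i) && P c]| = nth 0 [:: n - k; k] i.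
Proof.
move=> hkn hi H.
have := @card_row_lt [:: n - k; k] (Ordinal hi) (nth 0 [:: n - k; k] i) (leqnn _).
rewrite /= => <-; last by case: (i) hi => [|[|]].
apply: eq_card => c; rewrite !inE; case E: (@crow [:: n - k; k] c == i) => //=.
by rewrite (H c) //; apply/eqP.
Qed.

Lemma two_row_construct n k m0 mu' (y0 y1 : nat -> nat) :
  0 < k -> k <= n - k ->
  \sum_(0 <= b < (size mu').+1) y0 b = n - k ->
  \sum_(0 <= b < (size mu').+1) y1 b = k ->
  y1 0 = 0 -> k <= y0 0 ->
  (forall b, b < (size mu').+1 -> y0 b + y1 b = nth 0 (m0 :: mu') b) ->
  exists f : {ffun cell [:: n - k; k] -> 'I_(size (m0 :: mu'))},
    is_ssyt f /\ forall b, b < (size mu').+1 -> cnt f 1 b = y1 b.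
Proof.
move=> hk hkn S0 S1 y10 y00 Hy.
set m := (size mu').+1.
pose Y i := if i == 0 then y0 else y1.
pose P i a := \sum_(0 <= b < a.+1) Y i b.
have Pmono : forall i a a', a <= a' -> P i a <= P i a'.
  move=> i a a' h; rewrite /P (@big_cat_nat _ _ _ a.+1 0 a'.+1) //=; exact: leq_addr.
have Ptot : forall i, i < 2 -> P i m.-1 = nth 0 [:: n - k; k] i.
  by move=> [|[|]] // _; rewrite /P /Y /=.
pose f := [ffun c : cell [:: n - k; k] =>
  (inord (find (fun a => ccol c < P (crow c) a) (iota 0 m)) : 'I_(size (m0 :: mu')))].
have C1 : forall c a, a < m -> (f c <= a) = (ccol c < P (crow c) a).
  move=> c a ha.
  have hhas : has (fun a => ccol c < P (crow c) a) (iota 0 m).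
    apply/hasP; exists m.-1; first by rewrite mem_iota add0n /m ltnSn.
    rewrite Ptot; [exact: ccol_lt | exact: crow2].
  have ht := hhas; rewrite has_find size_iota in ht.
  have hnth := nth_find 0 hhas; rewrite nth_iota // add0n in hnth.
  rewrite /f ffunE inordK //.
  apply/idP/idP => h.
    exact: leq_trans hnth (Pmono _ _ _ h).
  rewrite leqNgt; apply/negP => h2.
  by have := before_find 0 h2; rewrite nth_iota ?(ltn_trans h2 ht) // add0n h.
have C0 : forall c, (f c : nat) < m by move=> c; exact: ltn_ord.
have Cnt : forall i b, i < 2 -> b < m -> cnt f i b = Y i b.
  move=> i b hi hb; apply: (@sum_eq_pointwise _ _ m) => // a ha.
  rewrite -Nle_sum -/(P i a) /Nle.
  have := @card_row_lt [:: n - k; k] (Ordinal hi) (P i a).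
  rewrite /= => <-.
  - apply: eq_card => c; rewrite !inE; case E: (@crow [:: n - k; k] c == i) => //=.
    by rewrite C1 // (eqP E).
  - by rewrite -Ptot //; apply: Pmono; rewrite /m; lia.
  - apply: leq_trans (_ : nth 0 [:: n - k; k] i <= _).
      by rewrite -Ptot //; apply: Pmono; rewrite /m; lia.
    by case: (i) hi => [|[|]].
exists f; split; last by move=> b hb; rewrite Cnt.
apply: ssytP.
- move=> c c' e1 e2; rewrite C1 // e1.
  apply: leq_ltn_trans e2 _; have := C1 c' (f c') (C0 c'); by rewrite leqnn => <-.
- move=> c c' e1 e2.
  have r0 : crow c = 0 by have := crow2 c'; lia.
  have r1 : crow c' = 1 by have := crow2 c'; lia.
  have h0 : (f c : nat) = 0.
    apply/eqP; rewrite -leqn0 C1 // r0 /P big_nat1 /Y /=.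
    rewrite e1; apply: leq_trans y00; have := ccol_lt c'; by rewrite r1.
  rewrite h0 lt0n; apply/negP => /eqP h.
  have := C1 c' 0 isT; rewrite h leqnn r1 /P big_nat1 /Y /= y10 => /esym.
  by rewrite ltn0.
- move=> b; rewrite cnt_split !Cnt //; first exact: Hy.
Qed.


Lemma cnt_row_big (rho lam : seq nat) (f : {ffun cell rho -> 'I_(size lam)}) i b :
  size rho <= i -> cnt f i b = 0.
Proof.
move=> h; apply: eq_card0 => c; rewrite !inE; apply/negP => /andP [/eqP e _].
by have := crow_lt c; rewrite e ltnNge h.
Qed.

Lemma cnt_val_big (rho lam : seq nat) (f : {ffun cell rho -> 'I_(size lam)}) i b :
  size lam <= b -> cnt f i b = 0.
Proof.
move=> h; apply: eq_card0 => c; rewrite !inE; apply/negP => /andP [_ /eqP e].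
by have := ltn_ord (f c); rewrite e ltnNge h.
Qed.

Lemma kostka_two_row n k (mu : seq nat) :
  is_partition n mu -> 0 < k -> k <= n - k -> k <= head 0 mu ->
  kostka [:: n - k; k] mu = num_bounded_comps (size mu - 1) k (fun j => nth 0 mu j.+1).
Proof.
case: mu => [|m0 mu'] hp hk hkn hkh; first by rewrite /= in hkh; lia.
have F1 : forall f : {ffun cell [:: n - k; k] -> 'I_(size (m0 :: mu'))},
    is_ssyt f -> cnt f 1 0 = 0.
  move=> f Hf; apply: eq_card0 => c; rewrite !inE; apply/negP => /andP [/eqP r1 /eqP v0].
  have hc : (val c).2 < nth 0 [:: n - k; k] 0.
    have := ccol_lt c; rewrite r1 /= /ccol => h; exact: leq_trans h hkn.
  have := ssyt_col Hf (c := exist (fun c : 'I_2 * 'I_(n - k) => c.2 < nth 0 [:: n - k; k] c.1)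
             (ord0, (val c).2) hc) (c' := c) erefl.
  by rewrite r1 v0 => /(_ isT).
have F2 : forall f : {ffun cell [:: n - k; k] -> 'I_(size (m0 :: mu'))},
    is_ssyt f -> forall b, b < size (m0 :: mu') -> cnt f 0 b + cnt f 1 b = nth 0 (m0 :: mu') b.
  by move=> f Hf b hb; rewrite -(cnt_split f (Ordinal hb)) (ssyt_cont Hf).
have F3 : forall f : {ffun cell [:: n - k; k] -> 'I_(size (m0 :: mu'))}, forall i, i < 2 ->
    \sum_(0 <= b < (size mu').+1) cnt f i b = nth 0 [:: n - k; k] i.
  move=> f i hi; rewrite -Nle_sum /Nle; apply: card_row2 => // c ci.
  by rewrite -ci ccol_lt -ltnS ltn_ord.
have F5 : forall f : {ffun cell [:: n - k; k] -> 'I_(size (m0 :: mu'))}, forall b,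
    cnt f 1 b <= k.
  move=> f b; apply: leq_trans (_ : #|[set c | (@crow [:: n - k; k] c == 1) && true]| <= _).
    apply: subset_leq_card; apply/subsetP => c; rewrite !inE => /andP[-> _] //.
  rewrite (@card_row2 n k 1 predT) //= => c e; have := ccol_lt c; by rewrite e => ->.
pose phi (f : {ffun cell [:: n - k; k] -> 'I_(size (m0 :: mu'))}) :
  {ffun 'I_(size (m0 :: mu') - 1) -> 'I_k.+1} := [ffun j : 'I_(size (m0 :: mu') - 1) => (inord (cnt f 1 j.+1) : 'I_k.+1)].
have phiE : forall f j, (phi f j : nat) = cnt f 1 j.+1.
  by move=> f j; rewrite ffunE inordK // ltnS.
have e1 : size (m0 :: mu') - 1 = size mu' by rewrite subn1.
rewrite /kostka /num_bounded_comps -(card_in_imset (f := phi)); last first.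
  move=> f g; rewrite !inE => Hf Hg e.
  have c1 : forall b, cnt f 1 b = cnt g 1 b.
    move=> [|j]; first by rewrite F1 // F1.
    case: (ltnP j (size (m0 :: mu') - 1)) => hj.
      by have := congr1 (fun h : {ffun 'I_(size (m0 :: mu') - 1) -> 'I_k.+1} => (h (Ordinal hj) : nat)) e; rewrite /= !phiE.
    rewrite !cnt_val_big //; move: hj; rewrite e1 /=; lia.
  apply: ssyt_det => // i a; rewrite !Nle_sum; apply: eq_big_nat => b _.
  case: i => [|[|i]]; last 1 first.
  - by rewrite !cnt_row_big.
  - case: (ltnP b (size (m0 :: mu'))) => hb; last by rewrite !cnt_val_big.
    have := F2 f Hf b hb; have := F2 g Hg b hb; rewrite c1; lia.
  - exact: c1.
apply: eq_card => x; rewrite inE; apply/imsetP/idP.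
  move=> [f]; rewrite inE => Hf ->; apply/andP; split.
    rewrite (eq_bigr (fun j : 'I_(size (m0 :: mu') - 1) => cnt f 1 j.+1)); last by move=> j _; rewrite phiE.
    rewrite -(big_mkord xpredT (fun j => cnt f 1 j.+1)) e1.
    by have := F3 f 1 isT; rewrite big_nat_recl // F1 //= add0n => ->.
  apply/forallP => j; rewrite phiE.
  have hj : j.+1 < size (m0 :: mu') by have := ltn_ord j; lia.
  by rewrite -(F2 f Hf _ hj) leq_addl.
case/andP => /eqP hsum /forallP hb.
pose xn (j : nat) : nat := oapp (fun i : 'I_(size (m0 :: mu') - 1) => (x i : nat)) 0 (insub j).
have xnE : forall i : 'I_(size (m0 :: mu') - 1), xn i = x i by move=> i; rewrite /xn valK.
have xnN : forall j, size (m0 :: mu') - 1 <= j -> xn j = 0.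
  by move=> j hj; rewrite /xn insubN // -leqNgt.
pose y1 (b : nat) := if b is j.+1 then xn j else 0.
pose y0 (b : nat) := nth 0 (m0 :: mu') b - y1 b.
have y1le : forall b, y1 b <= nth 0 (m0 :: mu') b.
  move=> [|j] //=; case: (ltnP j (size (m0 :: mu') - 1)) => hj.
    by have := xnE (Ordinal hj); rewrite /= => ->; exact: hb (Ordinal hj).
  by rewrite xnN.
have S1 : \sum_(0 <= b < (size mu').+1) y1 b = k.
  rewrite big_nat_recl //= add0n big_mkord -e1 -hsum.
  by apply: eq_bigr => i _; rewrite xnE.
have Smu : \sum_(0 <= b < (size mu').+1) nth 0 (m0 :: mu') b = n.
  case/and3P: hp => _ _ /eqP <-.
  by rewrite sumnE [RHS](big_nth 0).
have S0 : \sum_(0 <= b < (size mu').+1) y0 b = n - k.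
  suff : \sum_(0 <= b < (size mu').+1) y0 b + k = n by lia.
  rewrite -S1 -big_split /= -Smu; apply: eq_bigr => b _; by rewrite subnK.
have y00 : k <= y0 0 by rewrite /y0 /= subn0.
have [f [Hf Hc]] := @two_row_construct n k m0 mu' y0 y1 hk hkn S0 S1 erefl
  y00 (fun b _ => subnK (y1le b)).
exists f; first by rewrite inE.
apply/ffunP => j; apply: val_inj; rewrite /= phiE Hc; first by rewrite /= xnE.
by have := ltn_ord j; lia.
Qed.


Lemma term_le_sum p (F : 'I_p -> nat) j : F j <= \sum_i F i.
Proof. by rewrite (bigD1 j) //= leq_addr. Qed.

Lemma nbc_single k B : num_bounded_comps 1 k B = if B 0 < k then 0 else 1.
Proof.
rewrite /num_bounded_comps; case: ltnP => h.
  apply: eq_card0 => x; rewrite !inE big_ord1; apply/negP => /andP [/eqP e /forallP /(_ ord0)].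
  by rewrite e /= leqNgt h.
apply: (@eq_trans _ _ #|[set ([ffun => ord_max] : {ffun 'I_1 -> 'I_k.+1})]|); last exact: cards1.
apply: eq_card => x; rewrite !inE big_ord1.
apply/andP/eqP.
  move=> [/eqP e _]; apply/ffunP => i; rewrite ffunE (ord1 i); apply: val_inj; exact: e.
move=> ->; split; first by rewrite ffunE.
by apply/forallP => i; rewrite ffunE (ord1 i).
Qed.

Lemma nbc_one p B : (forall j, j < p -> 0 < B j) -> num_bounded_comps p 1 B = p.
Proof.
move=> hB; rewrite /num_bounded_comps.
pose e (j : 'I_p) : {ffun 'I_p -> 'I_2} := [ffun i => inord (i == j)].
have eE : forall j i, (e j i : nat) = (i == j) by move=> j i; rewrite ffunE inordK //; case: (i == j).
have inj_e : injective e.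
  move=> j1 j2 h; have := congr1 (fun f : {ffun 'I_p -> 'I_2} => (f j1 : nat)) h.
  by rewrite /= !eE eqxx; case: eqP.
rewrite -[RHS]card_ord -(card_imset (mem 'I_p) inj_e).
apply: eq_card => x; rewrite !inE; apply/idP/imsetP.
  case/andP => /eqP hs hb.
  case: (boolP [exists j, (x j : nat) == 1]) => [/existsP [j /eqP hj]|].
    exists j => //; apply/ffunP => i; apply: val_inj; rewrite /= eE.
    case: eqP => [->|/eqP hij] //.
    have h0 : \sum_(i < p | i != j) (x i : nat) = 0 by move: hs; rewrite (bigD1 j) //= hj add1n => /succn_inj.
    move/eqP: h0; rewrite sum_nat_eq0.
    by move/forallP => /(_ i) /implyP /(_ hij) /eqP ->.
  rewrite negb_exists => /forallP hn.
  move: hs; rewrite big1 // => i _; have := hn i; have := ltn_ord (x i).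
  by case: (x i : nat) => [|[|]].
move=> [j _ ->]; apply/andP; split.
  apply/eqP; rewrite (bigD1 j) //= eE eqxx big1 // => i /negPf hi; by rewrite eE hi.
apply/forallP => i; rewrite eE; case: eqP => [->|] //; exact: hB.
Qed.

Lemma nbc_tables k (s : seq nat) :
  num_bounded_comps (size s) k (nth 0 s) = num_tables [:: k; sumn s - k] s.
Proof.
rewrite /num_bounded_comps /num_tables.
set N := sumn [:: k; sumn s - k].
pose phi (M : {ffun 'I_(size [:: k; sumn s - k]) * 'I_(size s) -> 'I_N.+1}) :
  {ffun 'I_(size s) -> 'I_k.+1} := [ffun j : 'I_(size s) => inord (M (ord0, j))].
have Ssum : \sum_(j < size s) nth 0 s j = sumn s by rewrite sumnE (big_nth 0) big_mkord.
have colsum : forall M : {ffun 'I_(size [:: k; sumn s - k]) * 'I_(size s) -> 'I_N.+1},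
   (forall j : 'I_(size s), \sum_(i < size [:: k; sumn s - k]) (M (i, j) : nat) == nth 0 s j) ->
   forall j : 'I_(size s), (M (ord0, j) : nat) + M (ord_max, j) = nth 0 s j.
  move=> M H j; have := H j; rewrite /= big_ord_recl big_ord1 => /eqP <-.
  by congr (_ + _); congr (nat_of_ord (M (_, j))); exact: val_inj.
have row0 : forall M : {ffun 'I_(size [:: k; sumn s - k]) * 'I_(size s) -> 'I_N.+1},
   (forall i : 'I_(size [:: k; sumn s - k]), \sum_(j < size s) (M (i, j) : nat) == nth 0 [:: k; sumn s - k] i) ->
   \sum_(j < size s) (M (ord0, j) : nat) = k.
  by move=> M H; have := H ord0; move/eqP.
rewrite -(card_in_imset (f := phi)); last first.
  move=> M M'; rewrite !inE => /andP [/forallP hr /forallP hc] /andP [/forallP hr' /forallP hc'] e.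
  have e0 : forall j : 'I_(size s), (M (ord0, j) : nat) = M' (ord0, j).
    move=> j; have := congr1 (fun f : {ffun 'I_(size s) -> 'I_k.+1} => (f j : nat)) e.
    rewrite /phi !ffunE !inordK //; rewrite ltnS.
    + by rewrite -(row0 M' hr'); exact: (term_le_sum (fun j => (M' (ord0, j) : nat))).
    + by rewrite -(row0 M hr); exact: (term_le_sum (fun j => (M (ord0, j) : nat))).
  apply/ffunP => -[i j]; apply: val_inj.
  case: i => [[|[|]]] //= hi.
    have -> : Ordinal hi = (ord0 : 'I_2) by apply: val_inj.
    by rewrite e0.
  have -> : Ordinal hi = (ord_max : 'I_(size [:: k; sumn s - k])) by apply: val_inj.
  have := colsum M hc j; have := colsum M' hc' j; rewrite e0 => h1 h2; apply: (@addnI (M' (ord0, j))); by rewrite h2 h1.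
apply: eq_card => x; rewrite inE; apply/idP/imsetP.
  case/andP => /eqP hs /forallP hb.
  have hxs : forall j, (x j : nat) <= nth 0 s j by move=> j; exact: hb j.
  have Sd : \sum_(j < size s) (nth 0 s j - x j) = sumn s - k.
    suff : \sum_(j < size s) (nth 0 s j - x j) + k = sumn s by lia.
    transitivity (\sum_(j < size s) (nth 0 s j - x j) + \sum_(j < size s) (x j : nat)); first by rewrite hs.
    by rewrite -big_split /= -Ssum; apply: eq_bigr => j _; rewrite subnK.
  have b1 : forall j : 'I_(size s), nth 0 s j - x j <= N.
    move=> j; apply: leq_trans (_ : sumn s - k <= N); last by rewrite /N /=; lia.
    by rewrite -Sd; exact: (term_le_sum (fun j : 'I_(size s) => nth 0 s j - x j)).
  have b0 : forall j : 'I_(size s), (x j : nat) <= N.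
    by move=> j; apply: leq_trans (_ : k <= N); [rewrite -ltnS | rewrite /N /=; lia].
  pose M : {ffun 'I_(size [:: k; sumn s - k]) * 'I_(size s) -> 'I_N.+1} :=
    [ffun p : 'I_(size [:: k; sumn s - k]) * 'I_(size s) => inord (if (p.1 : nat) == 0 then (x p.2 : nat) else nth 0 s p.2 - x p.2)].
  have M0 : forall j : 'I_(size s), (M (ord0, j) : nat) = x j by move=> j; rewrite ffunE inordK //= ltnS.
  have M1 : forall j : 'I_(size s), (M (ord_max, j) : nat) = nth 0 s j - x j by move=> j; rewrite ffunE inordK //= ltnS.
  exists M.
    rewrite inE; apply/andP; split; apply/forallP.
      case=> [[|[|]]] //= hi; apply/eqP.
        have -> : Ordinal hi = (ord0 : 'I_(size [:: k; sumn s - k])) by apply: val_inj.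
        transitivity (\sum_(j < size s) (x j : nat)); last exact: hs.
        apply: eq_bigr => j _; exact: M0.
      have -> : Ordinal hi = (ord_max : 'I_(size [:: k; sumn s - k])) by apply: val_inj.
      transitivity (\sum_(j < size s) (nth 0 s j - x j)); last exact: Sd.
      apply: eq_bigr => j _; exact: M1.
    move=> j; rewrite /= big_ord_recl big_ord1.
    have -> : lift ord0 ord0 = (ord_max : 'I_(size [:: k; sumn s - k])) by apply: val_inj.
    rewrite M0 M1 subnKC //.
  apply/ffunP => j; apply: val_inj; rewrite ffunE /= M0 inordK //.
move=> [M]; rewrite inE => /andP [/forallP hr /forallP hc] ->.
have e0 : forall j : 'I_(size s), (M (ord0, j) : nat) <= k.
  move=> j; rewrite -(row0 M hr); exact: (term_le_sum (fun j => (M (ord0, j) : nat))).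
apply/andP; split.
  apply/eqP; transitivity (\sum_(j < size s) (M (ord0, j) : nat)); last exact: row0 M hr.
  apply: eq_bigr => j _; rewrite ffunE inordK //; rewrite ltnS; exact: e0.
apply/forallP => j; rewrite ffunE inordK ?ltnS ?e0 //.
by rewrite -(colsum M hc j) leq_addr.
Qed.

Theorem corollary3p1 (n : nat) (lam mu : seq nat) :
  is_partition n lam -> is_partition n mu ->
  (* (a) *)
  (2 <= n ->
     kostka [:: n - 1; 1] lam * kostka [:: n - 1; 1] mu
       = (size lam - 1) * (size mu - 1)
     /\ beta n [:: n - 1; 1] = (1 - 2%:R / n%:R)%R :> rat)
  /\
  (* (b) *)
  (forall rho : seq nat, is_partition n rho ->
     0 < kostka rho lam * kostka rho mu ->
     size rho <= minn (size lam) (size mu)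
     /\ maxn (head 0 lam) (head 0 mu) <= head 0 rho)
  /\
  (* (c) *)
  (forall k j : nat, 1 <= k <= n./2 -> lam = [:: n - j; j] ->
     kostka [:: n - k; k] lam = if j < k then 0 else 1)
  /\
  (* (d) *)
  (forall k : nat, 1 <= k <= n./2 -> k <= head 0 mu ->
     kostka [:: n - k; k] mu
       = num_bounded_comps (size mu - 1) k (fun j => nth 0 mu j.+1)
     /\ num_bounded_comps (size mu - 1) k (fun j => nth 0 mu j.+1)
       = num_tables [:: k; n - head 0 mu - k] (behead mu)).
Proof.
move=> hl hm.
split.
  move=> hn.
  have ka : forall l, is_partition n l -> kostka [:: n - 1; 1] l = size l - 1.
    move=> l hp.
    have hs : 0 < size l.
      case: (l) hp => [|a l'] //; case/and3P => _ _ /eqP /= h; lia.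
    have hh : 1 <= head 0 l by rewrite -nth0; exact: (part_nth_pos hp hs).
    rewrite kostka_two_row //; last lia.
    rewrite nbc_one // => j hj; apply: (part_nth_pos hp); lia.
  split; first by rewrite !ka.
  rewrite /beta !big_ord_recl big_ord0 /=.
  have -> : (2 * 1 - 1) = 1 by [].
  have -> : (2 * (bump 0 0).+1 - 1) = 3 by [].
  have hn0 : (n%:R != 0 :> rat)%R by rewrite pnatr_eq0; lia.
  rewrite natrB; last lia.
  field; exact: hn0.
split.
  move=> rho hr; rewrite muln_gt0 => /andP [h1 h2].
  have [a1 b1] := kostka_pos hr h1; have [a2 b2] := kostka_pos hr h2.
  by split; [rewrite leq_min a1 a2 | rewrite geq_max b1 b2].
split.
  move=> k j hk el; subst lam.
  case/and3P: hl => /= hs hpos /eqP hsum.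
  move: hs hpos; rewrite /= !andbT => hs /andP [hp1 hp2].
  rewrite kostka_two_row //; [| apply/and3P; split => //=; [by rewrite hs | by rewrite hp1 hp2 | by apply/eqP] | lia | lia | rewrite /=; lia].
  have -> : size [:: n - j; j] - 1 = 1 by [].
  by rewrite nbc_single.
move=> k hk hkh.
case: mu hm hkh => [|m0 mu'] hm hkh; first by rewrite /= in hkh; lia.
split; first by apply: kostka_two_row => //; lia.
have -> : size (m0 :: mu') - 1 = size mu' by rewrite subn1.
have -> : n - head 0 (m0 :: mu') - k = sumn mu' - k.
  case/and3P: hm => _ _ /eqP <- /=; lia.
exact: nbc_tables.
Qed.
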